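(* Let $T$ be a theory extending $\mathsf{ACA}_0$ and let $\alpha$ be a primitive recursive well-ordering with $\mathrm{otyp}(\alpha)<|T|_{\mathsf{WF}}$. Then $T\vdash^{\Sigma^1_1}\mathsf{WF}(\alpha)$.
   Context: A theory is a set of sentences of the language of second-order arithmetic; $T+\psi$ denotes $T\cup\{\psi\}$. $\mathrm{otyp}$ denotes order type. For primitive recursive $\prec$, $\mathsf{WF}(\prec):=\forall X(\exists x\in X\to\exists x\in X\,\forall y\in X\,\neg(y\prec x))$; $|T|_{\mathsf{WF}}$ is the supremum of the order types of primitive recursive presentations $\prec$ of well-orderings with $T\vdash\mathsf{WF}(\prec)$. $T\vdash^{\Sigma^1_1}\varphi$ means there is a true (in the standard model) $\Sigma^1_1$ sentence $\psi$ with $T+\psi\vdash\varphi$. *)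

(* Defs.v *)
From Stdlib Require Import List Arith.
Import ListNotations.

Inductive prf : Type :=
| PZ : prf
| PS : prf
| PP : nat -> prf
| PC : prf -> list prf -> prf
| PR : prf -> prf -> prf.

Fixpoint pev (f : prf) (xs : list nat) : nat :=
  match f with
  | PZ => 0
  | PS => S (hd 0 xs)
  | PP i => nth i xs 0
  | PC g gs => pev g (map (fun h => pev h xs) gs)
  | PR g h =>
      (fix r (n : nat) : nat :=
         match n with
         | 0 => pev g (tl xs)
         | S m => pev h (m :: r m :: tl xs)
         end) (hd 0 xs)
  end.

Inductive term : Type :=
| tvar : nat -> term
| tfun : prf -> list term -> term.

Definition tzero : term := tfun PZ [].
Definition tsucc (t : term) : term := tfun PS [t].

Inductive form : Type :=
| fbot : form
| feq : term -> term -> form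
| fmem : term -> nat -> form
| fimp : form -> form -> form
| fall1 : form -> form
| fall2 : form -> form.

Definition fneg (p : form) : form := fimp p fbot.
Definition fand (p q : form) : form := fneg (fimp p (fneg q)).
Definition fiff (p q : form) : form := fand (fimp p q) (fimp q p).
Definition fex1 (p : form) : form := fneg (fall1 (fneg p)).
Definition fex2 (p : form) : form := fneg (fall2 (fneg p)).

Fixpoint tsubst (s : nat -> term) (t : term) : term :=
  match t with
  | tvar n => s n
  | tfun f l => tfun f (map (tsubst s) l)
  end.

Definition up1 (s : nat -> term) : nat -> term :=
  fun n => match n with 0 => tvar 0 | S m => tsubst (fun k => tvar (S k)) (s m) end.

Fixpoint fsubst1 (s : nat -> term) (p : form) : form :=
  match p with
  | fbot => fbot
  | feq a b => feq (tsubst s a) (tsubst s b)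
  | fmem a X => fmem (tsubst s a) X
  | fimp a b => fimp (fsubst1 s a) (fsubst1 s b)
  | fall1 a => fall1 (fsubst1 (up1 s) a)
  | fall2 a => fall2 (fsubst1 s a)
  end.

Definition up2 (r : nat -> nat) : nat -> nat :=
  fun n => match n with 0 => 0 | S m => S (r m) end.

Fixpoint fren2 (r : nat -> nat) (p : form) : form :=
  match p with
  | fbot => fbot
  | feq a b => feq a b
  | fmem a X => fmem a (r X)
  | fimp a b => fimp (fren2 r a) (fren2 r b)
  | fall1 a => fall1 (fren2 r a)
  | fall2 a => fall2 (fren2 (up2 r) a)
  end.

Definition inst1 (t : term) : nat -> term :=
  fun n => match n with 0 => t | S m => tvar m end.
Definition inst2 (Y : nat) : nat -> nat :=
  fun n => match n with 0 => Y | S m => m end.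
Definition lift1 (p : form) : form := fsubst1 (fun n => tvar (S n)) p.
Definition lift2 (p : form) : form := fren2 S p.

Inductive LogAx : form -> Prop :=
| axK p q : LogAx (fimp p (fimp q p))
| axS p q r : LogAx (fimp (fimp p (fimp q r)) (fimp (fimp p q) (fimp p r)))
| axDN p : LogAx (fimp (fneg (fneg p)) p)
| axInst1 p t : LogAx (fimp (fall1 p) (fsubst1 (inst1 t) p))
| axInst2 p Y : LogAx (fimp (fall2 p) (fren2 (inst2 Y) p))
| axGen1 p q : LogAx (fimp (fall1 (fimp (lift1 q) p)) (fimp q (fall1 p)))
| axGen2 p q : LogAx (fimp (fall2 (fimp (lift2 q) p)) (fimp q (fall2 p)))
| axEqRefl t : LogAx (feq t t)
| axEqSubst s t p :
    LogAx (fimp (feq s t) (fimp (fsubst1 (inst1 s) p) (fsubst1 (inst1 t) p))).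

Inductive prov (T : form -> Prop) : form -> Prop :=
| pr_hyp p : T p -> prov T p
| pr_ax p : LogAx p -> prov T p
| pr_mp p q : prov T (fimp p q) -> prov T p -> prov T q
| pr_gen1 p : prov T p -> prov T (fall1 p)
| pr_gen2 p : prov T p -> prov T (fall2 p).

Definition extend (T : form -> Prop) (psi : form) : form -> Prop :=
  fun p => T p \/ p = psi.

Fixpoint tbound (n : nat) (t : term) : Prop :=
  match t with
  | tvar m => m < n
  | tfun _ l =>
      (fix go (l : list term) : Prop :=
         match l with nil => True | u :: l' => tbound n u /\ go l' end) l
  end.

Fixpoint fbound1 (n : nat) (p : form) : Prop :=
  match p with
  | fbot => True
  | feq a b => tbound n a /\ tbound n b
  | fmem a _ => tbound n a
  | fimp a b => fbound1 n a /\ fbound1 n b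
  | fall1 a => fbound1 (S n) a
  | fall2 a => fbound1 n a
  end.

Fixpoint fbound2 (n : nat) (p : form) : Prop :=
  match p with
  | fbot => True
  | feq _ _ => True
  | fmem _ X => X < n
  | fimp a b => fbound2 n a /\ fbound2 n b
  | fall1 a => fbound2 n a
  | fall2 a => fbound2 (S n) a
  end.

Definition sentence (p : form) : Prop := fbound1 0 p /\ fbound2 0 p.

Fixpoint arith (p : form) : Prop :=
  match p with
  | fbot | feq _ _ | fmem _ _ => True
  | fimp a b => arith a /\ arith b
  | fall1 a => arith a
  | fall2 _ => False
  end.

Inductive sigma11 : form -> Prop :=
| s11_arith p : arith p -> sigma11 p
| s11_ex p : sigma11 p -> sigma11 (fex2 p).

Fixpoint teval (e : nat -> nat) (t : term) : nat :=
  match t with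
  | tvar n => e n
  | tfun f l => pev f (map (teval e) l)
  end.

Definition scons {A : Type} (a : A) (e : nat -> A) : nat -> A :=
  fun n => match n with 0 => a | S m => e m end.

Fixpoint sat (e1 : nat -> nat) (e2 : nat -> nat -> Prop) (p : form) : Prop :=
  match p with
  | fbot => False
  | feq a b => teval e1 a = teval e1 b
  | fmem a X => e2 X (teval e1 a)
  | fimp a b => sat e1 e2 a -> sat e1 e2 b
  | fall1 a => forall n : nat, sat (scons n e1) e2 a
  | fall2 a => forall P : nat -> Prop, sat e1 (scons P e2) a
  end.

Definition true_sentence (p : form) : Prop :=
  sentence p /\ sat (fun _ => 0) (fun _ _ => False) p.

Fixpoint nall1 (n : nat) (p : form) : form :=
  match n with 0 => p | S m => fall1 (nall1 m p) end.
Fixpoint nall2 (n : nat) (p : form) : form :=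
  match n with 0 => p | S m => fall2 (nall2 m p) end.

(* open axioms; ACA_0 consists of their universal closures *)
Inductive aca_basic : form -> Prop :=
| ab_succ_ne0 t : aca_basic (fneg (feq (tsucc t) tzero))
| ab_succ_inj s t : aca_basic (fimp (feq (tsucc s) (tsucc t)) (feq s t))
| ab_Z ts : aca_basic (feq (tfun PZ ts) tzero)
| ab_S t ts : aca_basic (feq (tfun PS (t :: ts)) (tsucc t))
| ab_S_nil : aca_basic (feq (tfun PS []) (tsucc tzero))
| ab_P i ts : aca_basic (feq (tfun (PP i) ts) (nth i ts tzero))
| ab_C f gs ts : aca_basic (feq (tfun (PC f gs) ts) (tfun f (map (fun g => tfun g ts) gs)))
| ab_R_nil g h : aca_basic (feq (tfun (PR g h) []) (tfun g []))
| ab_R0 g h ts : aca_basic (feq (tfun (PR g h) (tzero :: ts)) (tfun g ts))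
| ab_RS g h t ts :
    aca_basic (feq (tfun (PR g h) (tsucc t :: ts))
                   (tfun h (t :: tfun (PR g h) (t :: ts) :: ts)))
| ab_ind :
    aca_basic (fall2 (fimp (fmem tzero 0)
                 (fimp (fall1 (fimp (fmem (tvar 0) 0) (fmem (tsucc (tvar 0)) 0)))
                       (fall1 (fmem (tvar 0) 0)))))
| ab_acomp p : arith p ->
    aca_basic (fex2 (fall1 (fiff (fmem (tvar 0) 0) (lift2 p)))).

Definition ACA0 (psi : form) : Prop :=
  exists th n m, aca_basic th /\ psi = nall1 n (nall2 m th) /\ sentence psi.

(* code a presents the relation  x < y  iff  a(x,y) <> 0 *)
Definition precf (a : prf) (s t : term) : form := fneg (feq (tfun a [s; t]) tzero).

(* WF(<) := forall X (exists x in X -> exists x in X forall y in X, ~ y < x) *)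
Definition WF (a : prf) : form :=
  fall2 (fimp (fex1 (fmem (tvar 0) 0))
              (fex1 (fand (fmem (tvar 0) 0)
                          (fall1 (fimp (fmem (tvar 0) 0)
                                       (fneg (precf a (tvar 0) (tvar 1)))))))).

Definition prec (a : prf) (x y : nat) : Prop := pev a [x; y] <> 0.
Definition fld (a : prf) (x : nat) : Prop := exists y, prec a x y \/ prec a y x.

Definition is_wo (a : prf) : Prop :=
  (forall x, ~ prec a x x) /\
  (forall x y z, prec a x y -> prec a y z -> prec a x z) /\
  (forall x y, fld a x -> fld a y -> x = y \/ prec a x y \/ prec a y x) /\
  well_founded (prec a).

(* otyp(a) < otyp(b): a is isomorphic to a proper initial segment of b *)
Definition otyp_lt (a b : prf) : Prop :=
  exists b0, fld b b0 /\ exists f : nat -> nat,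
    (forall x, fld a x -> fld b (f x) /\ prec b (f x) b0) /\
    (forall y, prec b y b0 -> exists x, fld a x /\ f x = y) /\
    (forall x y, fld a x -> fld a y -> (prec a x y <-> prec b (f x) (f y))).

Definition below_WF_ordinal (T : form -> Prop) (a : prf) : Prop :=
  exists b, is_wo b /\ prov T (WF b) /\ otyp_lt a b.

Definition prov_s11 (T : form -> Prop) (phi : form) : Prop :=
  exists psi, sigma11 psi /\ true_sentence psi /\ prov (extend T psi) phi.

(* Main.v *)
Require Import Defs.
From Stdlib Require Import List Arith Lia.
Import ListNotations.

Fixpoint imps (G : list form) (p : form) : form :=
  match G with [] => p | h :: G' => fimp h (imps G' p) end.

Section L.
Variable T : form -> Prop.
Notation pv := (prov T).

Lemma mp p q : pv (fimp p q) -> pv p -> pv q.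
Proof. intros; eapply pr_mp; eauto. Qed.
Lemma kI p q : pv q -> pv (fimp p q).
Proof. intros; eapply mp; [apply pr_ax, axK|auto]. Qed.
Lemma thI p : pv (fimp p p).
Proof.
  eapply mp; [eapply mp; [apply pr_ax, (axS p (fimp p p) p)|apply pr_ax, axK]|apply pr_ax, axK].
Qed.
Lemma sI p q r : pv (fimp p (fimp q r)) -> pv (fimp p q) -> pv (fimp p r).
Proof. intros; eapply mp; [eapply mp; [apply pr_ax, axS|eauto]|eauto]. Qed.
Lemma comp a b c : pv (fimp a b) -> pv (fimp b c) -> pv (fimp a c).
Proof. intros; eapply sI; [apply kI; eauto|eauto]. Qed.
Lemma lift_imp h x y z : pv (fimp x (fimp y z)) ->
  pv (fimp (fimp h x) (fimp (fimp h y) (fimp h z))).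
Proof.
  intros H. apply kI with (p:=h) in H.
  eapply comp; [eapply mp; [apply pr_ax, axS|exact H]|apply pr_ax, axS].
Qed.
Lemma ctxMPthm G p q : pv (fimp (imps G (fimp p q)) (fimp (imps G p) (imps G q))).
Proof.
  induction G; simpl. apply thI. apply lift_imp; auto.
Qed.
Lemma cmp G p q : pv (imps G (fimp p q)) -> pv (imps G p) -> pv (imps G q).
Proof. intros; eapply mp; [eapply mp; [apply ctxMPthm|eauto]|eauto]. Qed.
Lemma cthm G p : pv p -> pv (imps G p).
Proof. induction G; simpl; auto using kI. Qed.
Lemma cweak_thm G p : pv (fimp p (imps G p)).
Proof.
  induction G; simpl. apply thI. eapply comp; [apply IHG|apply pr_ax, axK].
Qed.
Lemma chyp G p : In p G -> pv (imps G p).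
Proof.
  induction G; simpl; intros H; [contradiction|].
  destruct H as [->|H]. apply cweak_thm. apply kI; auto.
Qed.
Lemma imps_app G H p : imps (G ++ H) p = imps G (imps H p).
Proof. induction G; simpl; congruence. Qed.
Lemma cweak G H p : pv (imps G p) -> pv (imps (G ++ H) p).
Proof. intros; rewrite imps_app; eapply cmp; [apply cthm, cweak_thm|eauto]. Qed.
Lemma cax G p : LogAx p -> pv (imps G p).
Proof. intros; apply cthm, pr_ax; auto. Qed.
Lemma call1E G p t q : pv (imps G (fall1 p)) -> q = fsubst1 (inst1 t) p -> pv (imps G q).
Proof. intros H ->; eapply cmp; [apply cax, axInst1|eauto]. Qed.
Lemma call2E G p Y q : pv (imps G (fall2 p)) -> q = fren2 (inst2 Y) p -> pv (imps G q).
Proof. intros H ->; eapply cmp; [apply cax, axInst2|eauto]. Qed.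
Lemma gen1_aux G D p : pv (imps D (fall1 (imps (map lift1 G) p))) -> pv (imps (D ++ G) (fall1 p)).
Proof.
  revert D; induction G; simpl; intros D H.
  - rewrite app_nil_r; auto.
  - replace (D ++ a :: G) with ((D ++ [a]) ++ G) by (rewrite <- app_assoc; auto).
    apply IHG. rewrite imps_app; simpl. eapply cmp; [apply cax, axGen1|eauto].
Qed.
Lemma cgen1 G p : pv (imps (map lift1 G) p) -> pv (imps G (fall1 p)).
Proof. intros H; apply (gen1_aux G []); simpl; apply pr_gen1; auto. Qed.
Lemma gen2_aux G D p : pv (imps D (fall2 (imps (map lift2 G) p))) -> pv (imps (D ++ G) (fall2 p)).
Proof.
  revert D; induction G; simpl; intros D H.
  - rewrite app_nil_r; auto.
  - replace (D ++ a :: G) with ((D ++ [a]) ++ G) by (rewrite <- app_assoc; auto).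
    apply IHG. rewrite imps_app; simpl. eapply cmp; [apply cax, axGen2|eauto].
Qed.
Lemma cgen2 G p : pv (imps (map lift2 G) p) -> pv (imps G (fall2 p)).
Proof. intros H; apply (gen2_aux G []); simpl; apply pr_gen2; auto. Qed.
Lemma cDN G p : pv (imps G (fneg (fneg p))) -> pv (imps G p).
Proof. intros; eapply cmp; [apply cax, axDN|eauto]. Qed.
Lemma absurd G p : pv (imps (G ++ [fneg p]) fbot) -> pv (imps G p).
Proof. rewrite imps_app; simpl; apply cDN. Qed.
Lemma chyp_last G p : pv (imps (G ++ [p]) p).
Proof. apply chyp; apply in_or_app; simpl; auto. Qed.
Lemma efq G p : pv (imps G fbot) -> pv (imps G p).
Proof.
  intros H. apply absurd. apply cweak; auto.
Qed.
Lemma andI G p q : pv (imps G p) -> pv (imps G q) -> pv (imps G (fand p q)).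
Proof.
  intros Hp Hq. unfold fand, fneg.
  change (imps G (fimp (fimp p (fimp q fbot)) fbot)) with (imps G (imps [fimp p (fimp q fbot)] fbot)).
  rewrite <- imps_app. eapply cmp; [eapply cmp; [apply chyp_last|]|]; apply cweak; auto.
Qed.
Lemma andE1 G p q : pv (imps G (fand p q)) -> pv (imps G p).
Proof.
  intros H. apply absurd. eapply cmp; [apply cweak, H|].
  change (pv (imps (G ++ [fneg p]) (imps [p] (fneg q)))).
  rewrite <- imps_app. apply efq.
  apply (cmp _ p fbot); [apply chyp; apply in_or_app; left; apply in_or_app; right; simpl; auto|apply chyp_last].
Qed.
Lemma andE2 G p q : pv (imps G (fand p q)) -> pv (imps G q).
Proof.
  intros H. apply absurd. eapply cmp; [apply cweak, H|].
  change (pv (imps (G ++ [fneg q]) (imps [p] (fneg q)))).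
  rewrite <- imps_app. apply chyp; apply in_or_app; left; apply in_or_app; right; simpl; auto.
Qed.
Lemma ex1I G p t q : pv (imps G q) -> q = fsubst1 (inst1 t) p -> pv (imps G (fex1 p)).
Proof.
  intros H E. change (pv (imps G (imps [fall1 (fneg p)] fbot))). rewrite <- imps_app.
  apply (cmp _ (fsubst1 (inst1 t) p) fbot).
  - eapply (call1E _ (fneg p) t); [apply chyp_last|reflexivity].
  - rewrite <- E. apply cweak; auto.
Qed.
Lemma ex1E G p q : pv (imps G (fex1 p)) -> pv (imps (map lift1 G ++ [p]) (lift1 q)) -> pv (imps G q).
Proof.
  intros H1 H2. apply absurd. eapply cmp; [apply cweak, H1|].
  apply cgen1. rewrite map_app. change (map lift1 [fneg q]) with [fneg (lift1 q)].
  change (pv (imps (map lift1 G ++ [fneg (lift1 q)]) (imps [p] fbot))).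
  rewrite <- imps_app, <- app_assoc. simpl app.
  rewrite imps_app in H2. simpl in H2.
  apply (cmp _ (lift1 q) fbot); [apply chyp; apply in_or_app; right; simpl; auto|].
  apply (cmp _ p); [|apply chyp; apply in_or_app; right; simpl; auto].
  rewrite imps_app; apply cmp with (p:=fimp p (lift1 q));
   [apply cthm, cweak_thm|exact H2].
Qed.
Lemma ex2E G p q : pv (imps G (fex2 p)) -> pv (imps (map lift2 G ++ [p]) (lift2 q)) -> pv (imps G q).
Proof.
  intros H1 H2. apply absurd. eapply cmp; [apply cweak, H1|].
  apply cgen2. rewrite map_app. change (map lift2 [fneg q]) with [fneg (lift2 q)].
  change (pv (imps (map lift2 G ++ [fneg (lift2 q)]) (imps [p] fbot))).
  rewrite <- imps_app, <- app_assoc. simpl app.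
  rewrite imps_app in H2. simpl in H2.
  apply (cmp _ (lift2 q) fbot); [apply chyp; apply in_or_app; right; simpl; auto|].
  apply (cmp _ p); [|apply chyp; apply in_or_app; right; simpl; auto].
  rewrite imps_app; apply cmp with (p:=fimp p (lift2 q));
   [apply cthm, cweak_thm|exact H2].
Qed.
End L.

Definition dbl : prf := PR PZ (PC PS [PC PS [PP 1]]).
Definition pi : prf := PR (PC dbl [PP 0]) (PC PS [PC dbl [PP 1]]).
Fixpoint pairf (x u : nat) : nat := match x with 0 => 2*u | S x' => S (2 * pairf x' u) end.

Lemma dbl_ok n : pev dbl [n] = 2 * n.
Proof. induction n; simpl in *; auto. rewrite IHn. lia. Qed.
Lemma pi_ok x u : pev pi [x; u] = pairf x u.
Proof.
  induction x. change (pev pi [0;u]) with (pev dbl [u]). rewrite dbl_ok; auto.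
  change (pev pi [S x; u]) with (S (pev dbl [pev pi [x;u]])).
  rewrite dbl_ok, IHx. reflexivity.
Qed.
Lemma pairf_inj x u y v : pairf x u = pairf y v -> x = y /\ u = v.
Proof.
  revert y; induction x; destruct y; simpl; intros H; try lia.
  destruct (IHx y); lia.
Qed.

Definition V := tvar.
Definition Pr s t := tfun pi [s; t].
Definition Tot := fall1 (fex1 (fmem (Pr (V 1) (V 0)) 0)).
Definition Emb a b := fall1 (fall1 (fall1 (fall1
  (fimp (fmem (Pr (V 3) (V 1)) 0) (fimp (fmem (Pr (V 2) (V 0)) 0)
     (fimp (precf a (V 3) (V 2)) (precf b (V 1) (V 0)))))))).
Definition psi a b := fex2 (fand Tot (Emb a b)).
Definition p0 := fex1 (fand (fmem (V 0) 0) (fmem (Pr (V 0) (V 1)) 1)).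
Definition Cbody := fex2 (fall1 (fiff (fmem (V 0) 0) (lift2 p0))).
Definition Cax := fall2 (fall2 Cbody).

Lemma psi_s11 a b : sigma11 (psi a b).
Proof. apply s11_ex, s11_arith. simpl. tauto. Qed.

Lemma psi_sent a b : sentence (psi a b).
Proof. split; simpl; repeat split; lia. Qed.

Lemma psi_true a b : otyp_lt a b -> true_sentence (psi a b).
Proof.
  intros [b0 [Hb0 [f [Hf1 [Hf2 Hf3]]]]].
  split; [apply psi_sent|].
  Opaque pi. simpl. intros H. apply (H (fun n => exists x, n = pairf x (f x))).
  intros H2. apply H2.
  - intros n. intros H3. apply (H3 (f n)). exists n. rewrite pi_ok. reflexivity.
  - intros x y u v [x' Ex] [y' Ey] Hp Hb.
    rewrite pi_ok in Ex, Ey.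
    apply pairf_inj in Ex as [-> ->]. apply pairf_inj in Ey as [-> ->].
    assert (Hab : prec a x' y') by exact Hp.
    assert (fld a x') by (exists y'; auto). assert (fld a y') by (exists x'; auto).
    apply (proj1 (Hf3 x' y' H0 H1)) in Hab. apply Hab. exact Hb.
Qed.
Transparent pi.

Ltac sg F := match goal with |- prov ?T (imps ?G _) => change (prov T (imps G F)) end.
Ltac inh := apply chyp; repeat (first [left; reflexivity | right]).
Ltac hav name F := match goal with |- prov ?T (imps ?G _) => assert (name : prov T (imps G F)) end.

Definition TotF k := fall1 (fex1 (fmem (Pr (V 1) (V 0)) k)).
Definition EmbF a b k := fall1 (fall1 (fall1 (fall1
  (fimp (fmem (Pr (V 3) (V 1)) k) (fimp (fmem (Pr (V 2) (V 0)) k)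
     (fimp (precf a (V 3) (V 2)) (precf b (V 1) (V 0)))))))).
Definition CbF := fall1 (fiff (fmem (V 0) 0) (fex1 (fand (fmem (V 0) 2) (fmem (Pr (V 0) (V 1)) 1)))).
Definition Mgoal a k := fex1 (fand (fmem (V 0) k) (fall1 (fimp (fmem (V 0) k) (fneg (precf a (V 0) (V 1)))))).

Lemma core T a b : prov T (WF b) -> prov T Cax -> prov T (psi a b) -> prov T (WF a).
Proof.
  intros HW HC HP.
  apply (cgen2 T []). cbn [map].
  change (prov T (imps [fex1 (fmem (V 0) 0)] (Mgoal a 0))).
  apply (ex2E _ _ (fand Tot (Emb a b))); [apply cthm; exact HP|]. cbn [map app].
  sg (Mgoal a 1).
  hav HCy (fex2 CbF).
  { eapply call2E; [eapply call2E; [apply cthm; exact HC|reflexivity]|reflexivity]. }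
  apply (ex2E _ _ CbF); [exact HCy|]. cbn [map app]. clear HCy.
  sg (Mgoal a 2).
  apply (ex1E _ _ (fmem (V 0) 2)); [inh|]. cbn [map app]. sg (Mgoal a 2).
  hav H5 (fex1 (fmem (Pr (V 1) (V 0)) 1)).
  { eapply (call1E _ _ _ (V 0)); [apply (andE1 _ _ (TotF 1) (EmbF a b 1)); inh|reflexivity]. }
  apply (ex1E _ _ _ _ H5). cbn [map app]. clear H5. sg (Mgoal a 2).
  hav H6 (fmem (V 0) 0).
  { apply (cmp _ _ (fex1 (fand (fmem (V 0) 2) (fmem (Pr (V 0) (V 1)) 1)))).
    - eapply andE2. eapply (call1E _ _ _ (V 0)); [inh|reflexivity].
    - apply (ex1I _ _ _ (V 1) (fand (fmem (V 1) 2) (fmem (Pr (V 1) (V 0)) 1))); [|reflexivity].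
      apply andI; inh. }
  hav H7 (fex1 (fand (fmem (V 0) 0) (fall1 (fimp (fmem (V 0) 0) (fneg (precf b (V 0) (V 1))))))).
  { eapply cmp; [eapply call2E; [apply cthm; exact HW|reflexivity]|].
    apply (ex1I _ _ _ (V 0) _ H6). reflexivity. }
  clear H6.
  apply (ex1E _ _ _ _ H7). cbn [map app]. clear H7. sg (Mgoal a 2).
  hav H8 (fex1 (fand (fmem (V 0) 2) (fmem (Pr (V 0) (V 1)) 1))).
  { apply (cmp _ _ (fmem (V 0) 0)).
    - eapply andE1. eapply (call1E _ _ _ (V 0)); [inh|reflexivity].
    - apply (andE1 _ _ _ (fall1 (fimp (fmem (V 0) 0) (fneg (precf b (V 0) (V 1)))))); inh. }
  apply (ex1E _ _ _ _ H8). cbn [map app]. clear H8. sg (Mgoal a 2).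
  apply (ex1I _ _ _ (V 0) (fand (fmem (V 0) 2) (fall1 (fimp (fmem (V 0) 2) (fneg (precf a (V 0) (V 1))))))); [|reflexivity].
  apply andI; [apply (andE1 _ _ _ (fmem (Pr (V 0) (V 1)) 1)); inh|].
  apply cgen1. cbn [map app].
  sg (imps [fmem (V 0) 2; precf a (V 0) (V 1)] fbot). rewrite <- imps_app. cbn [app].
  hav H10 (fex1 (fmem (Pr (V 1) (V 0)) 1)).
  { eapply (call1E _ _ _ (V 0)); [apply (andE1 _ _ (TotF 1) (EmbF a b 1)); inh|reflexivity]. }
  apply (ex1E _ _ _ _ H10). cbn [map app]. clear H10. sg fbot.
  hav H11 (fmem (V 0) 0).
  { apply (cmp _ _ (fex1 (fand (fmem (V 0) 2) (fmem (Pr (V 0) (V 1)) 1)))).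
    - eapply andE2. eapply (call1E _ _ _ (V 0)); [inh|reflexivity].
    - apply (ex1I _ _ _ (V 1) (fand (fmem (V 1) 2) (fmem (Pr (V 1) (V 0)) 1))); [|reflexivity].
      apply andI; inh. }
  hav H12 (precf b (V 0) (V 3)).
  { apply (cmp _ _ (precf a (V 1) (V 2))); [|inh].
    apply (cmp _ _ (fmem (Pr (V 2) (V 3)) 1));
      [|apply (andE2 _ _ (fmem (V 2) 2)); inh].
    apply (cmp _ _ (fmem (Pr (V 1) (V 0)) 1)); [|inh].
    eapply (call1E _ _ _ (V 3)); [eapply (call1E _ _ _ (V 0)); [eapply (call1E _ _ _ (V 2));
      [eapply (call1E _ _ _ (V 1)); [apply (andE2 _ _ (TotF 1) _); inh|]|]|]|].
    all: reflexivity. }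
  apply (cmp _ _ (precf b (V 0) (V 3)) fbot); [|exact H12].
  apply (cmp _ _ (fmem (V 0) 0) _ ); [|exact H11].
  eapply (call1E _ _ _ (V 0)); [apply (andE2 _ _ (fmem (V 3) 0) _); inh|].
  reflexivity.
Qed.

Lemma prov_mono (T T' : form -> Prop) p : (forall q, T q -> T' q) -> prov T p -> prov T' p.
Proof. intros HT H; induction H; [apply pr_hyp; auto|apply pr_ax; auto|eapply pr_mp; eauto|apply pr_gen1; auto|apply pr_gen2; auto]. Qed.

Lemma Cax_aca : ACA0 Cax.
Proof.
  exists Cbody, 0, 2. split; [apply ab_acomp; simpl; tauto|]. split; [reflexivity|].
  split; simpl; repeat split; lia.
Qed.

Theorem mainTheorem6 (T : form -> Prop) (a : prf) :
  (forall p, T p -> sentence p) ->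
  (forall psi, ACA0 psi -> prov T psi) ->
  is_wo a ->
  below_WF_ordinal T a ->
  prov_s11 T (WF a).
Proof.
  intros _ HA _ [b [_ [HW Hlt]]].
  exists (psi a b). split; [apply psi_s11|]. split; [apply psi_true; auto|].
  apply core with (b := b).
  - eapply prov_mono; [|exact HW]. intros q Hq; left; auto.
  - eapply prov_mono; [|apply HA, Cax_aca]. intros q Hq; left; auto.
  - apply pr_hyp. right; reflexivity.
Qed.
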